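(* Let $A,B\subset\{0,1\}^n$ be increasing events, let $\omega,\xi$ be independent uniform random elements of $\{0,1\}^n$. Then $$\mathrm P[A\circ B]\le\mathbb P[(A,B)\text{ occurs disjointly on }(\omega,\xi)]\le\mathrm P[A]\,\mathrm P[B].$$
   Context: $\mathrm P$ is the uniform measure on $\{0,1\}^n$. $(x,I)$ is a witness for $A$ if $\{y: y|_I=x|_I\}\subset A$; $(A,B)$ occurs disjointly on $(x,y)$ if there are disjoint $I,J\subset[n]$ with $(x,I)$ a witness for $A$ and $(y,J)$ a witness for $B$; $A\circ B=\{x:(A,B)\text{ occurs disjointly on }(x,x)\}$. An event is increasing if its indicator is increasing for the coordinatewise order. *)

(* Defs.v *)
From mathcomp Require Import all_boot all_order all_algebra.
Set Implicit Arguments. Unset Strict Implicit. Unset Printing Implicit Defensive.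
Import Order.TTheory GRing.Theory Num.Theory.
Local Open Scope ring_scope.

Definition cube (n : nat) := {ffun 'I_n -> bool}.

Definition witness n (A : {set cube n}) (x : cube n) (I : {set 'I_n}) : bool :=
  [forall y : cube n, [forall i in I, y i == x i] ==> (y \in A)].

Definition occurs_disj n (A B : {set cube n}) (x y : cube n) : bool :=
  [exists I : {set 'I_n}, exists J : {set 'I_n},
     [&& [disjoint I & J], witness A x I & witness B y J]].

Definition box n (A B : {set cube n}) : {set cube n} :=
  [set x | occurs_disj A B x x].

Definition cube_le n (x y : cube n) : bool := [forall i, x i ==> y i].
Definition increasing n (A : {set cube n}) : Prop :=
  forall x y : cube n, cube_le x y -> x \in A -> y \in A.

(* Uniform measure on {0,1}^n, and the product (independent) uniform measure
   on pairs (omega, xi). *)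
Definition Pu n (A : {set cube n}) : rat := #|A|%:R / (2 ^ n)%:R.
Definition Pu2 n (E : {set cube n * cube n}) : rat := #|E|%:R / (4 ^ n)%:R.

(* Main.v *)
Require Import Defs.
From mathcomp Require Import all_boot all_order all_algebra.
From mathcomp Require Import zify ring.
Import Order.TTheory GRing.Theory Num.Theory.
Local Open Scope ring_scope.
Local Close Scope ring_scope.
Set Implicit Arguments. Unset Strict Implicit.

Definition flip n (j : 'I_n) (u : cube n) : cube n :=
  [ffun i => if i == j then ~~ u i else u i].
Definition mix n (K : {set 'I_n}) (x y : cube n) : cube n :=
  [ffun i => if i \in K then y i else x i].

Arguments flip {n} j u.
Arguments mix {n} K x y.

Lemma flipK n (j : 'I_n) (u : cube n) : flip j (flip j u) = u.
Proof. apply/ffunP => i; rewrite !ffunE; case: eqP => // ->; by rewrite negbK. Qed.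

Lemma flipj n (j : 'I_n) (u : cube n) : flip j u j = ~~ u j.
Proof. by rewrite ffunE eqxx. Qed.

Lemma cube_le_refl n (u : cube n) : cube_le u u.
Proof. apply/forallP => i; exact: implybb. Qed.

Lemma le_flip n (j : 'I_n) (u : cube n) : u j = false -> cube_le u (flip j u).
Proof.
move=> uj; apply/forallP => i; rewrite ffunE; case: eqP => [->|_]; by rewrite ?uj ?implybb.
Qed.

Lemma witness_ext n (A : {set cube n}) (x x' : cube n) (I : {set 'I_n}) :
  (forall i, i \in I -> x i = x' i) -> witness A x I -> witness A x' I.
Proof.
move=> E /forallP W; apply/forallP => y; apply/implyP => /forallP Hy.
have := W y; move/implyP; apply; apply/forallP=> i; apply/implyP => iI.
rewrite E //; exact: (implyP (Hy i)).
Qed.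

Lemma witness_mono n (A : {set cube n}) (x x' : cube n) (I : {set 'I_n}) :
  increasing A -> cube_le x x' -> witness A x I -> witness A x' I.
Proof.
move=> HA /forallP le /forallP W; apply/forallP => y; apply/implyP => /forallP Hy.
pose y'' : cube n := [ffun i => if i \in I then x i else y i].
apply: (HA y'').
  apply/forallP => i; rewrite /y'' ffunE; case: ifP => iI; last by rewrite implybb.
  by have /eqP -> := implyP (Hy i) iI; exact: le.
have := W y''; move/implyP; apply; apply/forallP => i; rewrite /y'' ffunE.
by case: (i \in I); rewrite /= ?eqxx.
Qed.

Lemma witness_mem n (A : {set cube n}) (x : cube n) (I : {set 'I_n}) : witness A x I -> x \in A.
Proof.
move/forallP/(_ x)/implyP; apply; apply/forallP=> i; by rewrite eqxx implybT.
Qed.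

Lemma od_mono n (A B : {set cube n}) (u u' v v' : cube n) : increasing A -> increasing B ->
  cube_le u u' -> cube_le v v' -> occurs_disj A B u v -> occurs_disj A B u' v'.
Proof.
move=> HA HB Hu Hv /existsP[I /existsP[J /and3P[dIJ wA wB]]].
apply/existsP; exists I; apply/existsP; exists J.
by rewrite dIJ (witness_mono HA Hu wA) (witness_mono HB Hv wB).
Qed.

Lemma od_drop n (A B : {set cube n}) (j : 'I_n) (u v : cube n) : occurs_disj A B u v ->
  occurs_disj A B (flip j u) v || occurs_disj A B u (flip j v).
Proof.
move=> /existsP[I /existsP[J /and3P[dIJ wA wB]]].
case jI: (j \in I).
- apply/orP; right; apply/existsP; exists I; apply/existsP; exists J.
  rewrite dIJ wA /=; apply: witness_ext wB => i iJ; rewrite ffunE.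
  case: eqP => [eij|] //; subst i; by rewrite (disjointFr dIJ jI) in iJ.
- apply/orP; left; apply/existsP; exists I; apply/existsP; exists J.
  rewrite dIJ wB andbT /=; apply: witness_ext wA => i iI; rewrite ffunE.
  case: eqP => [eij|] //; subst i; by rewrite jI in iI.
Qed.

Lemma block0 n (A B : {set cube n}) (j : 'I_n) (u v : cube n) : increasing A -> increasing B ->
  u j = false -> v j = false ->
  (occurs_disj A B u v : nat) + occurs_disj A B (flip j u) (flip j v)
  <= (occurs_disj A B u (flip j v) : nat) + occurs_disj A B (flip j u) v.
Proof.
move=> HA HB uj vj; have lu := le_flip uj; have lv := le_flip vj.
case Huv: (occurs_disj A B u v).
  rewrite (od_mono HA HB (cube_le_refl u) lv Huv).
  rewrite (od_mono HA HB lu (cube_le_refl v) Huv).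
  by case: (occurs_disj A B (flip j u) (flip j v)).
move: (@od_drop _ A B j (flip j u) (flip j v)); rewrite !flipK.
case: (occurs_disj A B (flip j u) (flip j v)); last by [].
move=> /(_ isT); case: (occurs_disj A B u (flip j v));
  case: (occurs_disj A B (flip j u) v) => //.
Qed.

Lemma block n (A B : {set cube n}) (j : 'I_n) (u v : cube n) : increasing A -> increasing B ->
  u j = v j ->
  (occurs_disj A B u v : nat) + occurs_disj A B (flip j u) (flip j v)
  <= (occurs_disj A B u (flip j v) : nat) + occurs_disj A B (flip j u) v.
Proof.
move=> HA HB e; case uj: (u j).
  have := @block0 _ A B j (flip j u) (flip j v) HA HB (_ : flip j u j = false) (_ : flip j v j = false).
  rewrite !flipK !flipj -e uj => /(_ erefl erefl).
  by rewrite addnC [X in _ <= X]addnC.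
by apply: block0; rewrite // -e.
Qed.

Definition tau n (j : 'I_n) (a b : bool) (q : cube n * cube n) : cube n * cube n :=
  (if a then flip j q.1 else q.1, if b then flip j q.2 else q.2).

Lemma tau_inj n (j : 'I_n) a b : injective (tau j a b).
Proof.
apply: (can_inj (g := tau j a b)) => -[x y].
by rewrite /tau /=; case: a; case: b; rewrite /= ?flipK.
Qed.

Lemma card_sum (T : finType) (P : {set T}) : #|P| = \sum_t (t \in P : nat).
Proof. rewrite -sum1_card big_mkcond /=; apply: eq_bigr => t _; by case: (t \in P). Qed.

Lemma card_pre (T : finType) (f : T -> T) (S : {set T}) :
  injective f -> #|S| = \sum_t (f t \in S : nat).
Proof.
move=> inj; rewrite -(card_preimset S inj) card_sum.
by apply: eq_bigr => t _; rewrite inE.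
Qed.

Definition F n (j : 'I_n) (S : {set cube n * cube n}) q : nat :=
  (tau j false false q \in S : nat) + (tau j false true q \in S : nat)
  + (tau j true false q \in S : nat) + (tau j true true q \in S : nat).

Lemma cardF n (j : 'I_n) (S : {set cube n * cube n}) : 4 * #|S| = \sum_q F j S q.
Proof.
rewrite /F !big_split /= -!card_pre; try exact: tau_inj.
by rewrite !mulSn mul0n addn0 !addnA.
Qed.

Definition Dk n (A B : {set cube n}) (K : {set 'I_n}) : {set cube n * cube n} :=
  [set p | occurs_disj A B p.1 (mix K p.1 p.2)].

Lemma mixKr n (j : 'I_n) (K : {set 'I_n}) (x y : cube n) : j \notin K -> mix K x (flip j y) = mix K x y.
Proof.
move=> jK; apply/ffunP => i; case: (eqVneq i j) => [->|ne];
  rewrite !ffunE ?inE ?eqxx ?(negbTE ne) ?(negbTE jK) //.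
Qed.

Lemma mixKl n (j : 'I_n) (K : {set 'I_n}) (x y : cube n) : j \notin K -> mix K (flip j x) y = flip j (mix K x y).
Proof.
move=> jK; apply/ffunP => i; case: (eqVneq i j) => [->|ne];
  rewrite !ffunE ?inE ?eqxx ?(negbTE ne) ?(negbTE jK) //.
Qed.

Lemma mixJl n (j : 'I_n) (K : {set 'I_n}) (x y : cube n) : mix (j |: K) (flip j x) y = mix (j |: K) x y.
Proof.
apply/ffunP => i; case: (eqVneq i j) => [->|ne];
  rewrite !ffunE ?inE ?eqxx ?(negbTE ne) //.
Qed.

Lemma mixJr n (j : 'I_n) (K : {set 'I_n}) (x y : cube n) :
  mix (j |: K) x (flip j y) = flip j (mix (j |: K) x y).
Proof.
apply/ffunP => i; case: (eqVneq i j) => [->|ne];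
  rewrite !ffunE ?inE ?eqxx ?(negbTE ne) //.
Qed.

Lemma mixJ n (j : 'I_n) (K : {set 'I_n}) (x y : cube n) : j \notin K ->
  mix (j |: K) x y = if y j == x j then mix K x y else flip j (mix K x y).
Proof.
move=> jK; apply/ffunP => i; case: eqP => e; case: (eqVneq i j) => [->|ne];
  rewrite !ffunE ?inE ?eqxx ?(negbTE ne) ?(negbTE jK) //=.
by move/eqP: e; case: (y j); case: (x j).
Qed.

Lemma mix_at n (j : 'I_n) (K : {set 'I_n}) (x y : cube n) : j \notin K -> mix K x y j = x j.
Proof. by move=> jK; rewrite ffunE (negbTE jK). Qed.

Lemma pointwise n (A B : {set cube n}) (j : 'I_n) (K : {set 'I_n}) q :
  increasing A -> increasing B -> j \notin K ->
  F j (Dk A B K) q <= F j (Dk A B (j |: K)) q.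
Proof.
move=> HA HB jK; case: q => x y; rewrite /F /tau !inE /=.
rewrite !(@mixKr _ j K _ _ jK) !(@mixKl _ j K _ _ jK) !mixJl !mixJr (@mixJ _ j K x y jK).
have := @block _ A B j x (mix K x y) HA HB (esym (@mix_at _ j K x y jK)).
case: eqP => _; rewrite ?flipK; lia.
Qed.

Lemma step n (A B : {set cube n}) (j : 'I_n) (K : {set 'I_n}) :
  increasing A -> increasing B -> j \notin K ->
  #|Dk A B K| <= #|Dk A B (j |: K)|.
Proof.
move=> HA HB jK; rewrite -(leq_pmul2l (isT : 0 < 4)) !(cardF j).
by apply: leq_sum => q _; apply: pointwise.
Qed.

Lemma allK n (A B : {set cube n}) (K : {set 'I_n}) : increasing A -> increasing B ->
  #|Dk A B set0| <= #|Dk A B K|.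
Proof.
move=> HA HB; move: {2}#|K| (erefl #|K|) => m.
elim: m K => [|m IH] K HK.
  by rewrite (cards0_eq HK).
have : 0 < #|K| by rewrite HK.
case/card_gt0P => j jK.
have HK' : #|K :\ j| = m by move: HK; rewrite (cardsD1 j K) jK add1n => -[].
rewrite -(setD1K jK); apply: leq_trans (IH _ HK') (step HA HB _).
by rewrite setD11.
Qed.

Lemma cardT n : #|[set: cube n]| = 2 ^ n.
Proof. by rewrite cardsT card_ffun card_bool card_ord. Qed.

Lemma D0 n (A B : {set cube n}) : #|Dk A B set0| = #|box A B| * 2 ^ n.
Proof.
rewrite -cardT -cardsX; apply: eq_card => -[x y].
rewrite !inE /=.
have -> : mix set0 x y = x by apply/ffunP => i; rewrite ffunE inE.
by rewrite andbT.
Qed.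

Lemma DT n (A B : {set cube n}) :
  #|Dk A B setT| = #|[set p : cube n * cube n | occurs_disj A B p.1 p.2]|.
Proof.
apply: eq_card => -[x y]; rewrite !inE /=.
have -> : mix setT x y = y by apply/ffunP => i; rewrite ffunE inE.
by [].
Qed.

Lemma Dsub n (A B : {set cube n}) :
  #|[set p : cube n * cube n | occurs_disj A B p.1 p.2]| <= #|A| * #|B|.
Proof.
rewrite -cardsX; apply: subset_leq_card; apply/subsetP => -[x y].
rewrite !inE /= => /existsP[I /existsP[J /and3P[_ wA wB]]].
by rewrite (witness_mem wA) (witness_mem wB).
Qed.

Unset Implicit Arguments.
Local Open Scope ring_scope.

Theorem mainTheorem7 (n : nat) (A B : {set cube n}) :
  increasing A -> increasing B ->
  Pu (box A B) <= Pu2 [set p : cube n * cube n | occurs_disj A B p.1 p.2]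
  /\ Pu2 [set p : cube n * cube n | occurs_disj A B p.1 p.2] <= Pu A * Pu B.
Proof.
move=> HA HB.
have key := @allK _ A B setT HA HB; rewrite D0 DT in key.
have e4 : (4 ^ n)%:R = (2 ^ n)%:R * (2 ^ n)%:R :> rat.
  by rewrite -natrM -expnMn.
have p2 : (2 ^ n)%:R != 0 :> rat by rewrite pnatr_eq0 expn_eq0.
rewrite /Pu /Pu2 e4; split.
  have -> : #|box A B|%:R / (2 ^ n)%:R
      = (#|box A B| * 2 ^ n)%:R / ((2 ^ n)%:R * (2 ^ n)%:R) :> rat.
    by rewrite natrM; field.
  apply: ler_wpM2r; first by rewrite invr_ge0 -natrM ler0n.
  by rewrite ler_nat.
have -> : #|A|%:R / (2 ^ n)%:R * (#|B|%:R / (2 ^ n)%:R)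
    = (#|A| * #|B|)%:R / ((2 ^ n)%:R * (2 ^ n)%:R) :> rat.
  by rewrite natrM; field.
apply: ler_wpM2r; first by rewrite invr_ge0 -natrM ler0n.
by rewrite ler_nat Dsub.
Qed.
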